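(* Let $d\ge 1$. There is a unique map $\operatorname{vol}^\otimes_d$ from the set of multirectangles in $\mathbb{R}^d$ to $\mathbb{R}^{\otimes d}$ that is additive under disjoint unions and maps each rectangle $\prod_{i=1}^d[a_i,a_i+t_i)$ (with $t_i>0$) to $t_1\otimes\cdots\otimes t_d$.
   Context: A rectangle in $\mathbb{R}^d$ is a set $\prod_{i=1}^d[a_i,b_i)$ with $a_i<b_i$ real. A multirectangle is a finite union of rectangles (the empty set included). $\mathbb{R}^{\otimes d}$ denotes the $d$-th tensor power of $\mathbb{R}$ over $\mathbb{Q}$. *)

(* Defs.v *)
From HB Require Import structures.
From mathcomp Require Import all_boot all_order all_algebra.
From mathcomp Require Import boolp classical_sets reals.
Set Implicit Arguments. Unset Strict Implicit. Unset Printing Implicit Defensive.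
Import Order.TTheory GRing.Theory Num.Theory.
Local Open Scope ring_scope.
Local Open Scope classical_set_scope.

Definition rect (R : realType) (d : nat) (a b : 'I_d -> R) : set ('I_d -> R) :=
  [set x | forall i, a i <= x i /\ x i < b i].

Definition multirect (R : realType) (d : nat) (A : set ('I_d -> R)) : Prop :=
  exists s : seq (('I_d -> R) * ('I_d -> R)),
    (forall p, p \in s -> forall i, p.1 i < p.2 i) /\
    A = \big[setU/set0]_(p <- s) rect p.1 p.2.

Definition upd (R : Type) (d : nat) (t : 'I_d -> R) (i : 'I_d) (v : R) : 'I_d -> R :=
  fun j => if j == i then v else t j.

Definition qlinear (V W : lmodType rat) (g : V -> W) : Prop :=
  forall (q : rat) (u v : V), g (q *: u + v) = q *: g u + g v.

Definition qmultilinear (R : realType) (d : nat) (W : lmodType rat)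
    (f : ('I_d -> R) -> W) : Prop :=
  forall (t : 'I_d -> R) (i : 'I_d) (q : rat) (u v : R),
    f (upd t i (ratr q * u + v)) = q *: f (upd t i u) + f (upd t i v).

(* (V, tens) is the d-th tensor power of R over Q, characterised by its
   universal property: tens is Q-multilinear, and every Q-multilinear map
   out of R^d factors uniquely through a Q-linear map V -> W. *)
Definition is_tensor_power (R : realType) (d : nat) (V : lmodType rat)
    (tens : ('I_d -> R) -> V) : Prop :=
  qmultilinear tens /\
  forall (W : lmodType rat) (f : ('I_d -> R) -> W), qmultilinear f ->
    exists g : V -> W, [/\ qlinear g, (forall t, g (tens t) = f t) &
      forall g' : V -> W, qlinear g' -> (forall t, g' (tens t) = f t) ->
        forall v, g' v = g v].

Definition vol_additive (R : realType) (d : nat) (V : lmodType rat)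
    (vol : set ('I_d -> R) -> V) : Prop :=
  forall A B, multirect A -> multirect B -> A `&` B = set0 ->
    vol (A `|` B) = vol A + vol B.

Definition vol_normalized (R : realType) (d : nat) (V : lmodType rat)
    (tens : ('I_d -> R) -> V) (vol : set ('I_d -> R) -> V) : Prop :=
  forall a t : 'I_d -> R, (forall i, 0 < t i) ->
    vol (rect a (fun i => a i + t i)) = tens t.

(* Main.v *)
Require Import Defs.
From HB Require Import structures.
From mathcomp Require Import all_boot all_order all_algebra.
From mathcomp Require Import boolp classical_sets reals.
From mathcomp Require Import lra.
Set Implicit Arguments. Unset Strict Implicit. Unset Printing Implicit Defensive.
Import Order.TTheory GRing.Theory Num.Theory.
Local Open Scope ring_scope.
Local Open Scope classical_set_scope.

Section Ev.
Variable R : realType.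

Definition ev (Q : R -> Prop) := exists d0 : R, 0 < d0 /\ forall t, 0 < t -> t < d0 -> Q t.

Lemma ev_and P Q : ev P -> ev Q -> ev (fun t => P t /\ Q t).
Proof.
move=> [a [a0 Ha]] [b [b0 Hb]]; exists (Order.min a b); split.
  by rewrite lt_min a0 b0.
move=> t t0; rewrite lt_min => /andP[ta tb]; split; [exact: Ha|exact: Hb].
Qed.

Lemma ev_imp (P Q : R -> Prop) : (forall t, P t -> Q t) -> ev P -> ev Q.
Proof. by move=> H [a [a0 Ha]]; exists a; split=> // t t0 ta; apply: H; apply: Ha. Qed.

Lemma ev_ex P : ev P -> exists t, P t.
Proof.
move=> [a [a0 Ha]]; exists (a / 2); apply: Ha; lra.
Qed.

Lemma ev_T (P : R -> Prop) : (forall t, P t) -> ev P.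
Proof. by move=> H; exists 1; split=> // t _ _; apply: H. Qed.

Definition decides (Q : R -> Prop) (b : bool) := ev (fun t => Q t <-> b).

Lemma decides_ev Q b : decides Q b -> `[< ev Q >] = b.
Proof.
move=> H; case: b H => H.
  apply/asboolP; apply: ev_imp H => t [_ h]; exact: h.
apply/asboolP => HQ.
have [t [h1 h2]] := ev_ex (ev_and H HQ).
by have := (proj1 h1) h2.
Qed.

Lemma decides_or P Q b c : decides P b -> decides Q c ->
  decides (fun t => P t \/ Q t) (b || c).
Proof.
move=> HP HQ; apply: ev_imp (ev_and HP HQ) => t [[h1 h2] [h3 h4]].
split.
  by case=> [/h1 -> | /h3 ->] //; rewrite orbT.
by case/orP=> [/h2|/h4]; [left|right].
Qed.

Lemma decides_false : decides (fun _ => False) false.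
Proof. by apply: ev_T => t; split. Qed.

Lemma decides_all (I : eqType) (P : I -> R -> Prop) (b : I -> bool) (l : seq I) :
  (forall i, decides (P i) (b i)) ->
  decides (fun t => forall i, i \in l -> P i t) (all b l).
Proof.
move=> H; elim: l => [|i l IH] /=.
  by apply: ev_T => t; split.
apply: ev_imp (ev_and (H i) IH) => t [[h1 h2] [h3 h4]]; split.
  move=> A; rewrite h1 ?h3 //; first by move=> j jl; apply: A; rewrite inE jl orbT.
  by apply: A; rewrite inE eqxx.
case/andP=> bi bl j; rewrite inE => /orP[/eqP -> | jl]; first exact: h2.
exact: h4.
Qed.

Definition ell (a b y : R) (e : bool) : bool :=
  if e then (a < y) && (y <= b) else (a <= y) && (y < b).

Lemma decides_coord (a b y : R) (e : bool) :
  decides (fun t => a <= (if e then y - t else y) /\ (if e then y - t else y) < b)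
          (ell a b y e).
Proof.
case: e => /=; last first.
  by apply: ev_T => t; split; [case=> -> ->| case/andP=> -> ->].
have [/andP[ay yb]|] := boolP ((a < y) && (y <= b)).
  exists (y - a); split; first lra.
  move=> t t0 ta; split=> // _; split; lra.
rewrite negb_and -!ltNge => /orP[ya|yb].
  exists 1; split=> // t t0 _; split=> // [[h _]]; lra.
exists (y - b); split; first lra.
move=> t t0 tb; split=> // [[_ h]]; lra.
Qed.
End Ev.

Section Jump.
Variables (R : realType) (d : nat).
Notation P := ('I_d -> R).

Definition U (s : seq (P * P)) : set P := \big[setU/set0]_(p <- s) rect p.1 p.2.
Definition shift (x : P) (e : 'I_d -> bool) (t : R) : P :=
  fun i => if e i then x i - t else x i.
Definition lrect (a b x : P) (e : 'I_d -> bool) :=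
  all (fun i => ell (a i) (b i) (x i) (e i)) (enum 'I_d).

Lemma decides_ext (Q1 Q2 : R -> Prop) b : (forall t, Q1 t <-> Q2 t) ->
  decides Q1 b -> decides Q2 b.
Proof. move=> H; apply: ev_imp => t; rewrite -(H t); done. Qed.

Lemma decides_rect a b x e :
  decides (fun t => rect a b (shift x e t)) (lrect a b x e).
Proof.
apply: decides_ext (decides_all (enum 'I_d)
  (fun i => decides_coord (a i) (b i) (x i) (e i))) => t.
rewrite /rect /shift /=; split=> H i.
  by apply: H; rewrite mem_enum.
by move=> _; case: (H i).
Qed.

Lemma decides_U s x e :
  decides (fun t => U s (shift x e t)) (has (fun p => lrect p.1 p.2 x e) s).
Proof.
elim: s => [|p s IH] /=.
  apply: (decides_ext (Q1 := fun _ => False)); last exact: decides_false.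
  by move=> t; rewrite /U big_nil.
apply: decides_ext (decides_or (decides_rect p.1 p.2 x e) IH) => t.
by rewrite /U big_cons.
Qed.

Definition Lv (A : set P) (x : P) (e : 'I_d -> bool) : rat :=
  (`[< ev (fun t => A (shift x e t)) >] : nat)%:R.

Lemma Lv_U s x e : Lv (U s) x e = (has (fun p => lrect p.1 p.2 x e) s : nat)%:R.
Proof. by rewrite /Lv (decides_ev (decides_U s x e)). Qed.

Fixpoint Dl (A : set P) (x : P) (l : seq 'I_d) (e : 'I_d -> bool) : rat :=
  match l with
  | [::] => Lv A x e
  | i :: l' => Dl A x l' (upd e i true) - Dl A x l' (upd e i false)
  end.

Definition Delta (A : set P) (x : P) : rat := Dl A x (enum 'I_d) (fun _ => false).

Lemma U_cat s t : U (s ++ t) = U s `|` U t.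
Proof. by rewrite /U big_cat. Qed.

Lemma Lv_add s t x e : U s `&` U t = set0 ->
  Lv (U s `|` U t) x e = Lv (U s) x e + Lv (U t) x e.
Proof.
move=> D; rewrite -U_cat !Lv_U has_cat.
case Hs: (has _ s); case Ht: (has _ t) => //=; rewrite ?add0r ?addr0 //.
exfalso.
have es := decides_ev (decides_U s x e); rewrite Hs in es.
have et := decides_ev (decides_U t x e); rewrite Ht in et.
move/asboolP: es => es; move/asboolP: et => et.
have [u [h1 h2]] := ev_ex (ev_and es et).
have : (U s `&` U t) (shift x e u) by split.
by rewrite D.
Qed.

Lemma Dl_add s t x : U s `&` U t = set0 -> forall l e,
  Dl (U s `|` U t) x l e = Dl (U s) x l e + Dl (U t) x l e.
Proof.
move=> D; elim=> [|i l IH] e /=; first exact: Lv_add.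
rewrite !IH; lra.
Qed.

Lemma Dl_inv (A : set P) x i :
  (forall e c, Lv A x (upd e i c) = Lv A x e) ->
  forall l e c, Dl A x l (upd e i c) = Dl A x l e.
Proof.
move=> H; elim=> [|j l IH] e c /=; first exact: H.
have E : forall v, upd (upd e i c) j v =
   if j == i then upd e j v else upd (upd e j v) i c.
  move=> v; case: eqP => [->|/eqP ji]; apply: funext => k; rewrite /upd.
    by case: (k == i).
  by case: eqP => // ->; rewrite (negbTE ji).
rewrite !E; case: eqP => // _; by rewrite !IH.
Qed.

Lemma Dl_zero (A : set P) x i :
  (forall e c, Lv A x (upd e i c) = Lv A x e) ->
  forall l e, i \in l -> Dl A x l e = 0.
Proof.
move=> H; elim=> [|j l IH] e //=; rewrite inE => /orP[/eqP <-|il].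
  by rewrite !(Dl_inv H) subrr.
by rewrite !IH // subrr.
Qed.

Definition ends (s : seq (P * P)) : seq R :=
  flatten [seq [seq p.1 i | i <- enum 'I_d] ++ [seq p.2 i | i <- enum 'I_d] | p <- s].

Lemma ell_same (a b y : R) (c : bool) : y != a -> y != b -> ell a b y c = ell a b y false.
Proof.
move=> ya yb; case: c => //=.
by rewrite (lt_neqAle a y) (le_eqVlt y b) eq_sym (negbTE ya) (negbTE yb) /=.
Qed.

Lemma Delta_supp s x : Delta (U s) x != 0 -> forall i, x i \in ends s.
Proof.
move=> H i; apply/negPn/negP => /negP Hi; move/eqP: H; apply.
apply: (@Dl_zero _ _ i); last by rewrite mem_enum.
move=> e c; rewrite !Lv_U.
suff -> : has (fun p => lrect p.1 p.2 x (upd e i c)) s = has (fun p => lrect p.1 p.2 x e) s by [].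
apply: eq_in_has => p ps.
apply: eq_all => j /=; rewrite /upd; case: eqP => // ->.
have [h1 h2] : x i != p.1 i /\ x i != p.2 i.
  split; apply/eqP => E; apply: Hi; apply/flattenP;
    exists ([seq p.1 i | i <- enum 'I_d] ++ [seq p.2 i | i <- enum 'I_d]);
    rewrite ?(map_f _ ps) // mem_cat; [apply/orP; left|apply/orP; right];
    by rewrite E; apply: map_f; rewrite mem_enum.
by rewrite (ell_same _ h1 h2) (ell_same (e i) h1 h2).
Qed.
End Jump.

Section Rect.
Variables (R : realType) (d : nat).
Notation P := ('I_d -> R).

Lemma prod_all (l : seq 'I_d) (F : 'I_d -> bool) :
  (all F l : nat)%:R = \prod_(j <- l) (F j : nat)%:R :> rat.
Proof.
elim: l => [|i l IH]; first by rewrite big_nil.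
by rewrite big_cons /= -IH; case: (F i); rewrite /= ?mul1r ?mul0r.
Qed.

Definition hh (a b x : P) j : rat :=
  (ell (a j) (b j) (x j) true : nat)%:R - (ell (a j) (b j) (x j) false : nat)%:R.

Lemma Dl_rect (a b x : P) l e : uniq l ->
  Dl (rect a b) x l e = \prod_(j <- enum 'I_d)
     (if j \in l then hh a b x j else (ell (a j) (b j) (x j) (e j) : nat)%:R).
Proof.
elim: l e => [|i l IH] e /=.
  move=> _; rewrite /Lv (decides_ev (decides_rect a b x e)) /lrect prod_all.
  by apply: eq_bigr => j _.
case/andP=> il ul; rewrite !IH //.
rewrite !(bigD1_seq i) ?mem_enum ?enum_uniq //=.
rewrite (negbTE il) inE eqxx /= /upd eqxx.
have -> : \prod_(j <- enum 'I_d | j != i)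
    (if j \in l then hh a b x j else (ell (a j) (b j) (x j) ((fun j0 => if j0 == i then true else e j0) j) : nat)%:R)
  = \prod_(j <- enum 'I_d | j != i)
    (if j \in i :: l then hh a b x j else (ell (a j) (b j) (x j) (e j) : nat)%:R).
  by apply: eq_bigr => j ji; rewrite inE (negbTE ji).
have -> : \prod_(j <- enum 'I_d | j != i)
    (if j \in l then hh a b x j else (ell (a j) (b j) (x j) ((fun j0 => if j0 == i then false else e j0) j) : nat)%:R)
  = \prod_(j <- enum 'I_d | j != i)
    (if j \in i :: l then hh a b x j else (ell (a j) (b j) (x j) (e j) : nat)%:R).
  by apply: eq_bigr => j ji; rewrite inE (negbTE ji).
by rewrite -mulrBl.
Qed.

Lemma Delta_rect (a b x : P) :
  Delta (rect a b) x = \prod_(j <- enum 'I_d) hh a b x j.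
Proof.
rewrite /Delta Dl_rect ?enum_uniq //; apply: eq_bigr => j _.
by rewrite mem_enum.
Qed.

Lemma hh_b (a b x : P) j : a j < b j -> x j = b j -> hh a b x j = 1.
Proof. by rewrite /hh => ab ->; rewrite /= ab lexx ltxx /= andbF subr0. Qed.
Lemma hh_a (a b x : P) j : a j < b j -> x j = a j -> hh a b x j = -1.
Proof. by rewrite /hh => ab ->; rewrite /= ab lexx ltxx /= sub0r. Qed.
Lemma hh_0 (a b x : P) j : x j != a j -> x j != b j -> hh a b x j = 0.
Proof. by move=> h1 h2; rewrite /hh (ell_same _ h1 h2) subrr. Qed.

Fixpoint C (a b : P) (l : seq 'I_d) (z : P) : seq P :=
  match l with
  | [::] => [:: z]
  | i :: l' => C a b l' (upd z i (b i)) ++ C a b l' (upd z i (a i))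
  end.

Lemma C_out a b l z x : x \in C a b l z -> forall j, j \notin l -> x j = z j.
Proof.
elim: l z => [|i l IH] z /=; first by rewrite inE => /eqP ->.
rewrite mem_cat => /orP[] /IH H j; rewrite inE negb_or => /andP[ji jl];
  by rewrite H // /upd (negbTE ji).
Qed.

Lemma C_uniq a b l z : (forall j, a j != b j) -> uniq l -> uniq (C a b l z).
Proof.
move=> ab; elim: l z => [|i l IH] z //= /andP[il ul].
rewrite cat_uniq !IH //= andbT; apply/hasPn => x x2; apply/negP => x1.
have := C_out x1 il; have := C_out x2 il; rewrite /upd eqxx => -> E.
by move: (ab i); rewrite E eqxx.
Qed.

Lemma C_cover a b l z x : (forall j, j \in l -> x j = a j \/ x j = b j) ->
  (forall j, j \notin l -> x j = z j) -> x \in C a b l z.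
Proof.
elim: l z => [|i l IH] z /= H1 H2.
  by rewrite inE; apply/eqP; apply: funext => j; apply: H2.
rewrite mem_cat; case: (H1 i (mem_head _ _)) => E; apply/orP; [right|left];
  apply: IH => [j jl|j jl]; try (by apply: H1; rewrite inE jl orbT);
  rewrite /upd; case: eqP => [->//|/eqP ji]; apply: H2; by rewrite inE negb_or ji.
Qed.

Section Tens.
Variables (V : lmodType rat) (tens : P -> V).
Hypothesis Htens : qmultilinear tens.

Lemma expansion (a b : P) l z : (forall j, a j < b j) -> uniq l ->
  \sum_(x <- C a b l z) (\prod_(j <- l) hh a b x j) *: tens x =
  tens (fun j => if j \in l then b j - a j else z j).
Proof.
move=> ab; elim: l z => [|i l IH] z /=.
  by move=> _; rewrite big_seq1 big_nil scale1r.
case/andP=> il ul; rewrite big_cat /=.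
rewrite (eq_big_seq (fun x => (\prod_(j <- l) hh a b x j) *: tens x)); last first.
  move=> x xC; rewrite big_cons hh_b ?mul1r //.
  by rewrite (C_out xC il) /upd eqxx.
rewrite [X in _ + X](eq_big_seq (fun x => - ((\prod_(j <- l) hh a b x j) *: tens x))); last first.
  move=> x xC; rewrite big_cons hh_a ?mulN1r ?scaleNr //.
  by rewrite (C_out xC il) /upd eqxx.
rewrite sumrN !IH //.
set W0 := fun j => if j \in l then b j - a j else z j.
have E : forall c, (fun j => if j \in l then b j - a j else upd z i c j) = upd W0 i c.
  move=> c; apply: funext => j; rewrite /upd /W0; case: eqP => // ->.
  by rewrite (negbTE il).
rewrite !E.
have -> : (fun j => if j \in i :: l then b j - a j else z j) =
          upd W0 i (ratr (-1) * a i + b i).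
  apply: funext => j; rewrite /upd /W0 inE rmorphN1 mulN1r; case: eqP => [->|_] /=.
    by lra.
  by [].
by rewrite Htens scaleN1r addrC.
Qed.
End Tens.
End Rect.

Section Vol.
Variables (R : realType) (d : nat) (V : lmodType rat) (tens : ('I_d -> R) -> V).
Hypothesis Htens : qmultilinear tens.
Notation P := ('I_d -> R).

Lemma sum_supp (F : P -> V) X Y : uniq X -> uniq Y ->
  (forall x, F x != 0 -> x \in X) -> (forall x, F x != 0 -> x \in Y) ->
  \sum_(x <- X) F x = \sum_(x <- Y) F x.
Proof.
move=> uX uY HX HY.
have E : forall Z : seq P, \sum_(x <- Z) F x = \sum_(x <- [seq x <- Z | F x != 0]) F x.
  move=> Z; rewrite big_filter [LHS](bigID (fun x => F x != 0)) /=.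
  by rewrite [X in _ + X]big1 ?addr0 // => x /negPn/eqP.
rewrite (E X) (E Y); apply: perm_big; apply: uniq_perm; rewrite ?filter_uniq //.
move=> x; rewrite !mem_filter; case H: (F x != 0) => //=.
by rewrite HX ?HY.
Qed.

Definition ssum (F : P -> V) : V :=
  match pselect (exists X : seq P, uniq X /\ forall x, F x != 0 -> x \in X) with
  | left H => \sum_(x <- projT1 (cid H)) F x
  | right _ => 0
  end.

Lemma ssumE (F : P -> V) X : uniq X -> (forall x, F x != 0 -> x \in X) ->
  ssum F = \sum_(x <- X) F x.
Proof.
move=> uX HX; rewrite /ssum; case: pselect => [H|[]]; last by exists X.
case: (cid H) => Y [uY HY] /=; exact: sum_supp.
Qed.

Definition Glist (s : seq (P * P)) : seq P :=
  undup [seq (fun i => nth 0 (ends s) (k i)) | k : {ffun 'I_d -> 'I_(size (ends s))} <- enum {ffun 'I_d -> 'I_(size (ends s))}].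

Lemma Glist_cover s x : (forall i, x i \in ends s) -> x \in Glist s.
Proof.
move=> H; have Hk : forall i, (index (x i) (ends s) < size (ends s))%N.
  by move=> i; rewrite index_mem.
rewrite mem_undup; apply/mapP; exists [ffun i => Ordinal (Hk i)]; first by rewrite mem_enum.
by apply: funext => i; rewrite ffunE /= nth_index.
Qed.

Definition vol (A : set P) : V := ssum (fun x => Delta A x *: tens x).

Lemma vol_E (A : set P) X : uniq X -> (forall x, Delta A x != 0 -> x \in X) ->
  vol A = \sum_(x <- X) Delta A x *: tens x.
Proof.
move=> uX HX; apply: ssumE => // x Hx; apply: HX; apply/eqP => E.
by move: Hx; rewrite E scale0r eqxx.
Qed.

Lemma vol_add : vol_additive vol.
Proof.
move=> A B [sA [_ ->]] [sB [_ ->]] D.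
rewrite -/(U sA) -/(U sB) in D *.
set X := undup (Glist sA ++ Glist sB).
have uX : uniq X by apply: undup_uniq.
have DA : forall x, Delta (U sA `|` U sB) x = Delta (U sA) x + Delta (U sB) x.
  by move=> x; rewrite /Delta Dl_add.
have HA : forall x, Delta (U sA) x != 0 -> x \in X.
  by move=> x /Delta_supp H; rewrite mem_undup mem_cat Glist_cover.
have HB : forall x, Delta (U sB) x != 0 -> x \in X.
  by move=> x /Delta_supp H; rewrite mem_undup mem_cat (Glist_cover H) orbT.
rewrite (vol_E uX HA) (vol_E uX HB) (@vol_E _ X uX); last first.
  move=> x; rewrite DA; case: (Delta (U sA) x =P 0) => [->|/eqP /HA //].
  by rewrite add0r; apply: HB.
by rewrite -big_split /=; apply: eq_bigr => x _; rewrite DA scalerDl.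
Qed.

Lemma vol_norm : vol_normalized tens vol.
Proof.
move=> a t t0; set b := fun i => a i + t i.
have ab : forall j, a j < b j by move=> j; rewrite /b; have := t0 j; lra.
have ab' : forall j, a j != b j by move=> j; rewrite lt_eqF.
rewrite (@vol_E _ (C a b (enum 'I_d) a)); last first.
- move=> x; rewrite Delta_rect => H; apply: C_cover => [j _|j]; last by rewrite mem_enum.
  have [//|xa] := eqVneq (x j) (a j); first by left.
  have [//|xb] := eqVneq (x j) (b j); first by right.
  move: H; rewrite (bigD1_seq j) ?mem_enum ?enum_uniq //= hh_0 // mul0r.
  by rewrite eqxx.
- exact: C_uniq (enum_uniq _).
rewrite (eq_bigr (fun x => (\prod_(j <- enum 'I_d) hh a b x j) *: tens x)); last first.
  by move=> x _; rewrite Delta_rect.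
rewrite expansion ?enum_uniq //; congr tens; apply: funext => j.
by rewrite mem_enum /b /= addrC addKr.
Qed.
End Vol.

Section Sets.
Variables (R : realType) (d : nat).
Notation P := ('I_d -> R).

Definition mr (A : set P) := exists s, A = U s.

Lemma U_nil : U (R:=R) (d:=d) [::] = @set0 P. Proof. by rewrite /U big_nil. Qed.
Lemma U_cons (p : P * P) (s : seq (P * P)) : U (p :: s) = rect p.1 p.2 `|` U s.
Proof. by rewrite /U big_cons. Qed.
Lemma U_1 (p : P * P) : U [:: p] = rect p.1 p.2.
Proof. by rewrite U_cons U_nil setU0. Qed.

Lemma rect_bool (a b x : P) :
  rect a b x <-> [forall i, (a i <= x i) && (x i < b i)].
Proof.
split=> [H|/forallP H i]; last by case/andP: (H i).
by apply/forallP => i; case: (H i) => -> ->.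
Qed.

Lemma rect_empty (a b : P) : ~~ [forall i, a i < b i] -> rect a b = set0.
Proof.
move=> /forallPn[i Hi]; apply: funext => x; apply: propext; split=> // H.
case: (H i) => h1 h2; move: Hi; rewrite (le_lt_trans h1 h2); done.
Qed.

Lemma mr_multirect A : mr A -> multirect A.
Proof.
move=> [s ->]; exists [seq p <- s | [forall i, p.1 i < p.2 i]]; split.
  by move=> p; rewrite mem_filter => /andP[/forallP H _].
elim: s => [|p s IH] //=; rewrite /U big_cons -/(U s) IH.
case: ifP => H; first by rewrite big_cons.
by rewrite rect_empty ?H // set0U.
Qed.

Lemma multirect_mr A : multirect A -> mr A.
Proof. by move=> [s [_ ->]]; exists s. Qed.

Definition mx (p q : P * P) : P * P :=
  (fun i => Order.max (p.1 i) (q.1 i), fun i => Order.min (p.2 i) (q.2 i)).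

Lemma rectI p q : rect p.1 p.2 `&` rect q.1 q.2 = rect (mx p q).1 (mx p q).2.
Proof.
apply: funext => x; apply: propext; rewrite /rect /mx /=; split.
  by move=> [H1 H2] i; case: (H1 i); case: (H2 i) => a1 a2 b1 b2;
     rewrite ge_max lt_min b1 a1 a2 b2.
move=> H; split=> i; case: (H i); rewrite ge_max lt_min => /andP[a1 a2] /andP[b1 b2] //.
Qed.

Lemma rectIU p t : rect p.1 p.2 `&` U t = U [seq mx p q | q <- t].
Proof.
elim: t => [|q t IH] /=; first by rewrite !U_nil setI0.
by rewrite !U_cons setIUr IH rectI.
Qed.

Lemma mrU (s : seq (P * P)) : mr (U s). Proof. by exists s. Qed.

Lemma mr_U (A B : set P) : mr A -> mr B -> mr (A `|` B).
Proof. by move=> [s ->] [t ->]; exists (s ++ t); rewrite U_cat. Qed.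

Lemma mr_I (A B : set P) : mr A -> mr B -> mr (A `&` B).
Proof.
move=> [s ->] [t ->]; elim: s => [|p s IH] /=.
  by rewrite U_nil set0I; exists [::]; rewrite U_nil.
rewrite U_cons setIUl rectIU; apply: mr_U => //; exact: mrU.
Qed.

Lemma U_mem (s : seq (P * P)) (x : P) : U s x <-> exists2 p, p \in s & rect p.1 p.2 x.
Proof.
elim: s => [|p s IH]; first by rewrite U_nil; split=> // [[]].
rewrite U_cons; split.
  case=> [H|/IH [q qs H]]; first by exists p; rewrite ?mem_head.
  by exists q; rewrite // inE qs orbT.
move=> [q]; rewrite inE => /orP[/eqP ->|qs H]; first by left.
by right; apply/IH; exists q.
Qed.

Definition slabs (p q : P * P) : seq (P * P) :=
  [seq (p.1, upd p.2 i (Order.min (p.2 i) (q.1 i))) | i <- enum 'I_d] ++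
  [seq (upd p.1 i (Order.max (p.1 i) (q.2 i)), p.2) | i <- enum 'I_d].

Lemma rectD (p q : P * P) : rect p.1 p.2 `\` rect q.1 q.2 = U (slabs p q).
Proof.
apply: funext => x; apply: propext; split.
  move=> [H1 H2]; have : ~~ [forall i, (q.1 i <= x i) && (x i < q.2 i)].
    by apply/negP => /rect_bool.
  move/forallPn => [i Hi]; apply/U_mem.
  rewrite negb_and -ltNge -leNgt in Hi; case/orP: Hi => Hi.
    exists (p.1, upd p.2 i (Order.min (p.2 i) (q.1 i))).
      by rewrite mem_cat; apply/orP; left; apply: map_f; rewrite mem_enum.
    move=> j; case: (H1 j) => h1 h2; split=> //=; rewrite /upd.
    by case: eqP => // ->; rewrite lt_min Hi -/(p.2 i); case: (H1 i) => _ ->.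
  exists (upd p.1 i (Order.max (p.1 i) (q.2 i)), p.2).
    by rewrite mem_cat; apply/orP; right; apply: map_f; rewrite mem_enum.
  move=> j; case: (H1 j) => h1 h2; split=> //=; rewrite /upd.
  by case: eqP => // ->; rewrite ge_max Hi; case: (H1 i) => ->.
move/U_mem => [r]; rewrite mem_cat => /orP[]/mapP[i _ ->] H; split.
- move=> j; case: (H j); rewrite /upd /=; case: eqP => [->|] // h1.
  by rewrite lt_min => /andP[].
- move=> Hq; case: (H i) (Hq i); rewrite /upd /= eqxx /= lt_min => _ /andP[_ h] [h' _].
  by move: h; rewrite ltNge h'.
- move=> j; case: (H j); rewrite /upd /=; case: eqP => [->|] // h1.
  by rewrite ge_max in h1; case/andP: h1 => ->.
- move=> Hq; case: (H i) (Hq i); rewrite /upd /= eqxx /= ge_max => /andP[_ h] _ [_ h'].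
  by move: h; rewrite leNgt h'.
Qed.

Lemma mr_D (A B : set P) : mr A -> mr B -> mr (A `\` B).
Proof.
move=> [s ->] [t ->].
have H : forall p, mr (rect p.1 p.2 `\` U t).
  move=> p; elim: t => [|q t IH].
    by rewrite U_nil setD0; exists [:: p]; rewrite U_1.
  rewrite U_cons setDUr rectD; apply: mr_I => //; exact: mrU.
elim: s => [|p s IH]; first by rewrite U_nil set0D; exists [::]; rewrite U_nil.
by rewrite U_cons setDUl; apply: mr_U.
Qed.

Section Meas.
Variables (V : lmodType rat) (mu : set P -> V).
Hypothesis Hmu : vol_additive mu.

Lemma mu0 : mu set0 = 0.
Proof.
have m0 : multirect (@set0 P).
  by exists [::]; split=> //; rewrite big_nil.
have := Hmu m0 m0 (setI0 _); rewrite setU0 -{1}[mu set0]addr0.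
by move=> /addrI.
Qed.

Lemma incl_excl (A B : set P) : mr A -> mr B -> mu (A `|` B) + mu (A `&` B) = mu A + mu B.
Proof.
move=> mA mB.
have mBA : multirect (B `\` A) by apply: mr_multirect; apply: mr_D.
have e1 : A `|` B = A `|` (B `\` A).
  apply: funext => x; apply: propext; split; last by case=> [|[]]; [left|right].
  by case=> H; [left|case: (pselect (A x)) => [?|?]; [left|right]].
have e2 : B = (A `&` B) `|` (B `\` A).
  apply: funext => x; apply: propext; split; last by case=> [[]|[]].
  by move=> H; case: (pselect (A x)) => ?; [left|right].
have d1 : A `&` (B `\` A) = set0.
  by apply: funext => x; apply: propext; split=> // [[? []]].
have d2 : (A `&` B) `&` (B `\` A) = set0.
  by apply: funext => x; apply: propext; split=> // [[[? ?] []]].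
rewrite e1 (Hmu (mr_multirect mA) mBA d1).
rewrite [in RHS]e2 (Hmu (mr_multirect (mr_I mA mB)) mBA d2).
by rewrite addrAC -addrA.
Qed.
End Meas.

Lemma uniq_meas (V : lmodType rat) (mu nu : set P -> V) :
  vol_additive mu -> vol_additive nu ->
  (forall a b, mu (rect a b) = nu (rect a b)) -> forall s, mu (U s) = nu (U s).
Proof.
move=> Hm Hn Hr s; move: {2}(size s) (erefl (size s)) => n.
elim: n s => [|n IH] [|p s] //=; first by rewrite U_nil !mu0.
case=> sn; have H1 := incl_excl Hm (mrU [:: p]) (mrU s).
have H2 := incl_excl Hn (mrU [:: p]) (mrU s).
rewrite U_1 rectIU in H1 H2.
rewrite (IH [seq mx p q | q <- s]) ?size_map // IH // Hr -H2 in H1.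
rewrite U_cons; move/eqP: H1; by rewrite (inj_eq (addIr _)) => /eqP.
Qed.
End Sets.


Theorem mainTheorem13 (R : realType) (d : nat) (V : lmodType rat)
    (tens : ('I_d -> R) -> V) :
  (0 < d)%N -> is_tensor_power tens ->
  exists vol : set ('I_d -> R) -> V,
    [/\ vol_additive vol, vol_normalized tens vol &
      forall vol' : set ('I_d -> R) -> V,
        vol_additive vol' -> vol_normalized tens vol' ->
        forall A, multirect A -> vol' A = vol A].
Proof.
move=> _ [Htens _].
exists (vol tens); split; first exact: vol_add.
  exact: vol_norm.
move=> vol' Ha Hn A /multirect_mr [s ->].
apply: uniq_meas => //; first exact: vol_add.
move=> a b; case: (boolP [forall i, a i < b i]) => H; last first.
  by rewrite rect_empty // !mu0 //; exact: vol_add.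
have -> : b = (fun i => a i + (b i - a i)) by apply: funext => i; rewrite addrC subrK.
rewrite Hn ?vol_norm // => i; rewrite subr_gt0; exact: (forallP H).
Qed.
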